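(* There is an absolute constant $C$ such that for all positive integers $k$ and $s$, $La^*([k]^2,\vee_s)\ge 2(s-1)k-Cs^2$.
   Context: $[k]^2$ is ordered coordinatewise. $\vee_s$ is the poset on $s+1$ elements $a,b_1,\dots,b_s$ whose only relations are $a<b_i$, $i=1,\dots,s$. For posets $P,R$, $P$ is a strong subposet of $R$ if there is an injection $i:P\to R$ with $p\le_P p'\iff i(p)\le_R i(p')$. A subset $F\subseteq Q$ is strong $P$-free if $P$ is not a strong subposet of $F$ with the induced order; $La^*(Q,P)$ is the maximum size of a strong $P$-free subset of $Q$. *)

(* Defs.v *)
From mathcomp Require Import all_boot all_order all_algebra.
Set Implicit Arguments. Unset Strict Implicit. Unset Printing Implicit Defensive.

Definition strong_subposet (P R : finType) (leP : rel P) (leR : rel R)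
  (A : {set R}) : bool :=
  [exists i : {ffun P -> R},
     [&& injectiveb i, [forall p, i p \in A]
       & [forall p, forall q, leP p q == leR (i p) (i q)]]].

Definition strong_free (P R : finType) (leP : rel P) (leR : rel R)
  (F : {set R}) : bool := ~~ strong_subposet leP leR F.

Definition La_star (P R : finType) (leP : rel P) (leR : rel R) : nat :=
  \max_(F : {set R} | strong_free leP leR F) #|F|.

(* The grid [k]^2 = {1..k}^2 (represented by 'I_k * 'I_k), coordinatewise. *)
Definition grid_le (k : nat) : rel ('I_k * 'I_k) :=
  fun x y => (x.1 <= y.1)%N && (x.2 <= y.2)%N.

(* The poset V_s on s+1 elements a, b_1..b_s: carrier option 'I_s with
   None = a, Some i = b_(i+1); only relations a < b_i (plus reflexivity). *)
Definition vee_le (s : nat) : rel (option 'I_s) :=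
  fun x y => (x == y) || (x == None).

(* Main.v *)
Require Import Defs.
From mathcomp Require Import all_boot all_order all_algebra.
From mathcomp Require Import zify.
Import GRing.Theory Num.Theory.
Local Open Scope ring_scope.

Lemma pig (s k lo : nat) (f : 'I_s -> nat) :
  injective f -> (forall j, lo <= f j)%N -> (forall j, f j < k)%N ->
  (s <= k - lo)%N.
Proof.
move=> fi Hl Hk.
have Hh : forall j, (f j - lo < k - lo)%N.
  by move=> j; have := Hl j; have := Hk j; lia.
pose h j := Ordinal (Hh j).
have hi : injective h.
  move=> x y /(congr1 val) /= E; apply: fi.
  by have := Hl x; have := Hl y; lia.
by have := leq_card h hi; rewrite !card_ord.
Qed.

Lemma card_lt (k n : nat) (A : {set 'I_k}) :
  (forall x, x \in A -> x < n)%N -> (#|A| <= n)%N.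
Proof.
move=> H.
pose h (x : {x | x \in A}) := Ordinal (H _ (valP x)).
have hi : injective h.
  by move=> x y /(congr1 val) /= E; apply: val_inj; apply: val_inj.
by have := leq_card h hi; rewrite card_sig card_ord.
Qed.

Lemma aux k s a : (0 < s)%N -> (k - s.-1 <= a)%N -> (s <= k - a)%N -> False.
Proof. rewrite -subn1; lia. Qed.

Lemma arith (k m L : nat) : (k * k - (k - m) * (k - m) <= L)%N ->
  (2 * m * k <= L + (m + 1) * (m + 1))%N.
Proof.
have [ks|ks] := leqP m k.
- have [d ->] : exists d, k = (m + d)%N by exists (k - m)%N; lia.
  rewrite addKn => H. nia.
- have -> : (k - m = 0)%N by lia.
  rewrite muln0 subn0 => H. nia.
Qed.

Definition Fset (k m : nat) : {set 'I_k * 'I_k} :=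
  [set x : 'I_k * 'I_k | (k - m <= x.1)%N || (k - m <= x.2)%N].

Lemma Fset_free (k s : nat) : (0 < s)%N ->
  strong_free (@vee_le s) (@grid_le k) (Fset k s.-1).
Proof.
move=> s0; apply/negP; case/existsP => i /and3P [/injectiveP inj /forallP inF /forallP ord].
have Hle : forall j, grid_le (i None) (i (Some j)).
  by move=> j; have /forallP/(_ (Some j))/eqP <- := ord None.
have Hnc : forall j j', j != j' -> grid_le (i (Some j)) (i (Some j')) = false.
  move=> j j' ne; have /forallP/(_ (Some j'))/eqP <- := ord (Some j).
  by rewrite /vee_le orbF; apply/negbTE; apply: contra ne => /eqP [->].
have Ha := inF None; rewrite /Fset inE in Ha.
case/orP: Ha => Ha.
- have fi : injective (fun j => nat_of_ord (i (Some j)).1).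
    move=> j j' E; apply/eqP; apply/negPn/negP => ne.
    have A := Hnc j j' ne; have B := Hnc j' j; rewrite eq_sym in B; have {}B := B ne.
    move: A B; rewrite /grid_le E leqnn /= ?andbT => /negbT A /negbT B.
    by move: A B; rewrite -!ltnNge => A B; have := ltn_trans A B; rewrite ltnn.
  have := @pig s k (i None).1 _ fi.
  have H1 : forall j, ((i None).1 <= (i (Some j)).1)%N by move=> j; case/andP: (Hle j).
  have H2 : forall j, ((i (Some j)).1 < k)%N by move=> j; exact: ltn_ord.
  move=> /(_ H1 H2). exact: aux s0 Ha.
- have fi : injective (fun j => nat_of_ord (i (Some j)).2).
    move=> j j' E; apply/eqP; apply/negPn/negP => ne.
    have A := Hnc j j' ne; have B := Hnc j' j; rewrite eq_sym in B; have {}B := B ne.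
    move: A B; rewrite /grid_le E leqnn /= ?andbT => /negbT A /negbT B.
    by move: A B; rewrite -!ltnNge => A B; have := ltn_trans A B; rewrite ltnn.
  have := @pig s k (i None).2 _ fi.
  have H1 : forall j, ((i None).2 <= (i (Some j)).2)%N by move=> j; case/andP: (Hle j).
  have H2 : forall j, ((i (Some j)).2 < k)%N by move=> j; exact: ltn_ord.
  move=> /(_ H1 H2). exact: aux s0 Ha.
Qed.

Lemma Fset_card (k m : nat) : (k * k - (k - m) * (k - m) <= #|Fset k m|)%N.
Proof.
rewrite cardsCs card_prod card_ord.
pose A := [set x : 'I_k | (x < k - m)%N].
have -> : ~: Fset k m = setX A A.
  by apply/setP => x; rewrite !inE negb_or -!ltnNge.
rewrite cardsX.
have hA : (#|A| <= k - m)%N by apply: card_lt => x; rewrite inE.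
have := leq_mul hA hA. lia.
Qed.

Theorem theorem1p5 :
  exists C : int, forall k s : nat, (0 < k)%N -> (0 < s)%N ->
    (La_star (@vee_le s) (@grid_le k))%:Z >=
      2 * (s%:Z - 1) * k%:Z - C * s%:Z ^+ 2.
Proof.
exists 1 => k s k0 s0.
have H : (k * k - (k - s.-1) * (k - s.-1) <= La_star (@vee_le s) (@grid_le k))%N.
  apply: leq_trans (Fset_card k s.-1) _.
  rewrite /La_star (bigD1 (Fset k s.-1)) /=; [exact: leq_maxl | exact: Fset_free].
move: H; set L := La_star _ _ => H.
rewrite -subn1 in H.
have Hn : (2 * (s - 1) * k <= L + s * s)%N.
  have := @arith k (s - 1)%N L H; have -> : (s - 1 + 1 = s)%N by lia. by [].
rewrite expr2 mul1r.
have -> : (s%:Z - 1) = (s - 1)%N%:Z by rewrite subzn.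
lia.
Qed.
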